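(* Let $T$ be a monoidal signature with valuation $v$, and suppose the synthesis procedure described in the context is run successively for a sequence of size parameters $(M_1,N_1,P_1,Q_1),(M_2,N_2,P_2,Q_2),\dots$, producing (after all runs) a set of reductions $\mathbb S$ and a set of congruences $\mathbb K$. Then for every $i$ and all string graphs $G,H$ of size $(M_i,N_i,P_i,Q_i)$ with $\llbracket G\rrbracket=\llbracket H\rrbracket$, the graphs $G$ and $H$ are equivalent under the equivalence relation generated by rewriting with $\mathbb S\cup\mathbb K$ (together with isomorphism). Moreover, if $\mathbb K=\emptyset$, then every such $G$ has a unique normal form with respect to $\mathbb S$ (up to isomorphism), and $\llbracket G\rrbracket=\llbracket H\rrbracket$ implies that $G$ and $H$ have isomorphic $\mathbb S$-normal forms.
   Context: String graphs over a monoidal signature $T=(\mathcal O,\mathcal M,\mathrm{dom},\mathrm{cod})$: finite directed graphs with node-vertices labelled by morphisms $f\in\mathcal M$ and wire-vertices labelled by objects in $\mathcal O$, edges (possibly typed $\mathrm{in}_i,\mathrm{out}_j$) each incident to at least one wire-vertex, each wire-vertex having at most one in-edge and one out-edge, labelling consistent with $\mathrm{dom},\mathrm{cod}$. Inputs $\mathrm{In}(G)$ are wire-vertices with no in-edge, outputs $\mathrm{Out}(G)$ those with no out-edge, $\mathrm{Bound}(G)=\mathrm{In}(G)\cup\mathrm{Out}(G)$. The plugging $G/_{(x,y)}$ ($x\in\mathrm{In}(G)$, $y\in\mathrm{Out}(G)$) identifies $x$ and $y$. A generator is, for $f\in\mathcal M$, the smallest string graph containing one node-vertex of type $f$ (one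 wire-vertex on each of its input and output edges), or the identity generator (two wire-vertices joined by an edge). A string graph has size $(M,N,P,Q)$ if it has $M$ inputs, $N$ outputs, at most $Q$ node-vertices, and is obtained from a disjoint union of generators by at most $P$ pluggings. A string graph rewrite rule $L\to R$ is a span of monomorphisms $L\leftarrow B\rightarrow R$ with $B$ discrete, mapping onto $\mathrm{Bound}(L)$ and $\mathrm{Bound}(R)$ and preserving which boundary points are inputs. A matching $m:L\to G$ is a monomorphism such that any edge of $G$ outside the image of $m$ that is adjacent to $m(v)$ has $v\in\mathrm{Bound}(L)$. Rewriting $G\to H$ with a rule and matching is double-pushout rewriting (remove the interior of $m(L)$, glue $R$ in along the boundary); for a set of rules $\mathbb S$, a graph is $\mathbb S$-irreducible (a normal form) if no rule of $\mathbb S$ matches it. A valuation $v$ assigns to each $o\in\mathcal O$ a finite-dimensional complex vector space and to each $f\in\mathcal M$ a linear map $v(f)$ from the tensor product of its input spaces to that of its output spaces; $\llbracket G\rrbracket$ is the linear map obtained by tensor contraction (node-vertices as $v(f)$, wire-vertices as identities, edges as contracted indices). Synthesis procedure: it is given an initial set $\mathbb S$ of rewrite rules in which every generator is $\mathbb S$-irreducible, and a function $\kappa$ from string graphs to $\mathbb N$ with $G\cong H\Rightarrow\kappa(G)=\kappa(H)$, $G\to_{\mathbb S}H\Rightarrow \kappa(G)>\kappa(H)$ (this property is maintained for all rules ever added), and such that rewriting with rules of $\mathbb S$ never increases the size of a graph (number of inputs/outputs fixed, node-vertices and pluggings non-increasing). Initially $\mathbb K=\emptyset$. A run with parameters $(M,N,P,Q)$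 enumerates (up to isomorphism) all string graphs of size $(M,N,P,Q)$ that are irreducible with respect to the current $\mathbb S$, partitions them into classes $C$ of graphs with equal evaluation $\llbracket\cdot\rrbracket$, and for each class $C$ takes the set $C'\subseteq C$ of $\kappa$-minimal elements, chooses $G_0\in C'$, adds to $\mathbb S$ the rules $G\to G_0$ for all $G\in C\setminus C'$, and adds to $\mathbb K$ the rules $G'\to G_0$ and $G_0\to G'$ for all $G'\in C'\setminus\{G_0\}$. Runs are performed in sequence, each using the $\mathbb S$ produced by the previous runs.
   Formalization: Each initial rule L → R of 𝕊 is also sound for the valuation v, that is ⟦L⟧ = ⟦R⟧ with the same boundary types on both sides. The statement above fails without it. *)

(* Defs.v *)
From HB Require Import structures.
From mathcomp Require Import all_boot all_order all_algebra.
From Stdlib Require Import Relations.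
Set Implicit Arguments. Unset Strict Implicit. Unset Printing Implicit Defensive.
Import GRing.Theory Num.Theory.

Record signature := Signature {
  sObj : Type;
  sMor : Type;
  sdom : sMor -> seq sObj;
  scod : sMor -> seq sObj }.

(* edge types: untyped (wire-wire), in_i, out_j *)
Definition ekind := option (bool * nat).
Notation EPlain := (@None (bool * nat)).
Notation EIn i := (Some (true, i)).
Notation EOut j := (Some (false, j)).

(* finite directed (multi)graphs with vertices labelled by objects (wire-vertices)
   or morphisms (node-vertices) and typed edges *)
Record graph (T : signature) := Graph {
  gV : finType;
  gE : finType;
  vlab : gV -> sObj T + sMor T;
  esrc : gE -> gV;
  etgt : gE -> gV;
  ekd : gE -> ekind }.
Arguments vlab {T g}. Arguments esrc {T g}. Arguments etgt {T g}. Arguments ekd {T g}.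

Section Graphs.
Variable T : signature.

Definition is_wire (G : graph T) (v : gV G) : bool := if vlab v is inl _ then true else false.

Definition edge_ok (G : graph T) (e : gE G) : Prop :=
  match vlab (esrc e), vlab (etgt e) with
  | inl a, inl b => a = b /\ ekd e = EPlain
  | inl a, inr f => exists i, ekd e = EIn i /\ i < size (sdom f) /\ nth a (sdom f) i = a
  | inr f, inl b => exists j, ekd e = EOut j /\ j < size (scod f) /\ nth b (scod f) j = b
  | inr _, inr _ => False
  end.

Definition is_string_graph (G : graph T) : Prop :=
  (forall e : gE G, is_wire (esrc e) \/ is_wire (etgt e)) /\
  (forall w : gV G, is_wire w -> forall e1 e2, etgt e1 = w -> etgt e2 = w -> e1 = e2) /\
  (forall w : gV G, is_wire w -> forall e1 e2, esrc e1 = w -> esrc e2 = w -> e1 = e2) /\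
  (forall e : gE G, edge_ok e) /\
  (forall (v : gV G) f, vlab v = inr f ->
     (forall i, i < size (sdom f) -> exists! e, etgt e = v /\ ekd e = EIn i) /\
     (forall j, j < size (scod f) -> exists! e, esrc e = v /\ ekd e = EOut j)).

Definition is_input (G : graph T) (v : gV G) : bool := is_wire v && [forall e : gE G, etgt e != v].
Definition is_output (G : graph T) (v : gV G) : bool := is_wire v && [forall e : gE G, esrc e != v].
Definition is_bound (G : graph T) (v : gV G) : bool := is_input v || is_output v.

Definition ghom (G H : graph T) (fv : gV G -> gV H) (fe : gE G -> gE H) : Prop :=
  (forall v, vlab (fv v) = vlab v) /\
  (forall e, esrc (fe e) = fv (esrc e) /\ etgt (fe e) = fv (etgt e) /\ ekd (fe e) = ekd e).

Definition giso (G H : graph T) : Prop :=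
  exists (fv : gV G -> gV H) (fe : gE G -> gE H),
    bijective fv /\ bijective fe /\ ghom fv fe.

Definition empty_graph : graph T :=
  @Graph T void void (fun v => match v with end) (fun e => match e with end)
    (fun e => match e with end) (fun e => match e with end).

Definition dunion (G H : graph T) : graph T :=
  @Graph T (gV G + gV H)%type (gE G + gE H)%type
    (fun v => match v with inl x => vlab x | inr y => vlab y end)
    (fun e => match e with inl x => inl (esrc x) | inr y => inr (esrc y) end)
    (fun e => match e with inl x => inl (etgt x) | inr y => inr (etgt y) end)
    (fun e => match e with inl x => ekd x | inr y => ekd y end).

Definition id_gen (a : sObj T) : graph T :=
  @Graph T bool unit (fun _ => inl a) (fun _ => false) (fun _ => true) (fun _ => EPlain).

(* generator of f: one node-vertex (None), one wire-vertex per input and output *)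
Definition mor_gen (f : sMor T) : graph T :=
  @Graph T (option ('I_(size (sdom f)) + 'I_(size (scod f))))%type
           ('I_(size (sdom f)) + 'I_(size (scod f)))%type
    (fun v => match v with
              | None => inr f
              | Some (inl i) => inl (tnth (in_tuple (sdom f)) i)
              | Some (inr j) => inl (tnth (in_tuple (scod f)) j) end)
    (fun e => match e with inl i => Some (inl i) | inr _ => None end)
    (fun e => match e with inl _ => None | inr j => Some (inr j) end)
    (fun e => match e with inl i => EIn (val i) | inr j => EOut (val j) end).

Definition generator (g : sObj T + sMor T) : graph T :=
  match g with inl a => id_gen a | inr f => mor_gen f end.

Definition gen_union (gs : seq (sObj T + sMor T)) : graph T :=
  foldr (fun g acc => dunion (generator g) acc) empty_graph gs.

(* plugging G/(x,y): identify x and y (y is removed, its edges redirected to x) *)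
Definition plug (G : graph T) (x y : gV G) (hxy : x != y) : graph T :=
  let r := fun v : gV G => insubd (exist (fun w => w != y) x hxy) v in
  @Graph T {w : gV G | w != y} (gE G)
    (fun w => vlab (val w)) (fun e => r (esrc e)) (fun e => r (etgt e)) (@ekd T G).

Inductive built : nat -> graph T -> Prop :=
| built_gens (gs : seq (sObj T + sMor T)) : built 0 (gen_union gs)
| built_plug k (G : graph T) (x y : gV G) (hxy : x != y) :
    built k G -> is_input x -> is_output y -> built k.+1 (plug hxy).

Record fsgraph := FSGraph {
  fg :> graph T;
  nin : nat;
  nout : nat;
  finp : 'I_nin -> gV fg;
  fout : 'I_nout -> gV fg }.

Definition inp_at (G : fsgraph) (i : nat) : option (gV G) := omap (@finp G) (insub i).
Definition out_at (G : fsgraph) (j : nat) : option (gV G) := omap (@fout G) (insub j).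

Definition is_framed (G : fsgraph) : Prop :=
  is_string_graph G /\ injective (@finp G) /\ injective (@fout G) /\
  (forall v : gV G, is_input v <-> exists i, finp i = v) /\
  (forall v : gV G, is_output v <-> exists j, fout j = v).

Definition fiso (G H : fsgraph) : Prop :=
  exists (fv : gV G -> gV H) (fe : gE G -> gE H),
    bijective fv /\ bijective fe /\ ghom fv fe /\
    (forall i, inp_at H i = omap fv (inp_at G i)) /\
    (forall j, out_at H j = omap fv (out_at G j)).

Definition has_size (p : nat * nat * nat * nat) (G : fsgraph) : Prop :=
  let: (M, N, P, Q) := p in
  nin G = M /\ nout G = N /\ #|[pred v : gV G | ~~ is_wire v]| <= Q /\
  exists k G0, k <= P /\ built k G0 /\ giso G G0.

(* a rule L -> R: the span L <- B -> R identifies the i-th input (resp. j-th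
   output) of L with the i-th input (resp. j-th output) of R *)
Definition rule := (fsgraph * fsgraph)%type.

Definition valid_rule (r : rule) : Prop :=
  is_framed r.1 /\ is_framed r.2 /\
  (forall i, omap vlab (inp_at r.1 i) = omap vlab (inp_at r.2 i)) /\
  (forall j, omap vlab (out_at r.1 j) = omap vlab (out_at r.2 j)) /\
  (forall i j, inp_at r.1 i = out_at r.1 j <-> inp_at r.2 i = out_at r.2 j).

(* a context: a graph with an outer framing and a framed "hole" (image of B) *)
Record context := Context {
  cg :> graph T;
  c_nin : nat; c_nout : nat;
  c_inp : 'I_c_nin -> gV cg; c_out : 'I_c_nout -> gV cg;
  h_nin : nat; h_nout : nat;
  h_inp : 'I_h_nin -> gV cg; h_out : 'I_h_nout -> gV cg }.

Definition cin_at (D : context) i : option (gV D) := omap (@c_inp D) (insub i).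
Definition cout_at (D : context) j : option (gV D) := omap (@c_out D) (insub j).
Definition hin_at (D : context) i : option (gV D) := omap (@h_inp D) (insub i).
Definition hout_at (D : context) j : option (gV D) := omap (@h_out D) (insub j).

(* G is the pushout of X <- B -> D (B discrete, both legs monic), with the
   framing of G inherited from the outer framing of D *)
Definition is_glue (X : fsgraph) (D : context) (G : fsgraph) : Prop :=
  exists (fD : gV D -> gV G) (fX : gV X -> gV G) (eD : gE D -> gE G) (eX : gE X -> gE G),
    injective fD /\ injective fX /\ injective eD /\ injective eX /\
    ghom fD eD /\ ghom fX eX /\
    (forall i, omap fX (inp_at X i) = omap fD (hin_at D i)) /\
    (forall j, omap fX (out_at X j) = omap fD (hout_at D j)) /\
    (forall g : gV G, (exists d, fD d = g) <-> ~ (exists x, ~~ is_bound x /\ fX x = g)) /\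
    (forall e : gE G, (exists d, eD d = e) <-> ~ (exists x, eX x = e)) /\
    (forall i, inp_at G i = omap fD (cin_at D i)) /\
    (forall j, out_at G j = omap fD (cout_at D j)).

Definition step (r : rule) (G H : fsgraph) : Prop :=
  is_framed G /\ is_framed H /\ exists D : context, is_glue r.1 D G /\ is_glue r.2 D H.

Definition ruleset := rule -> Prop.

Definition rstep (S : ruleset) (G H : fsgraph) : Prop := exists r, S r /\ step r G H.

Definition irreducible (S : ruleset) (G : fsgraph) : Prop := ~ exists H, rstep S G H.

Definition nform (S : ruleset) (G N : fsgraph) : Prop :=
  clos_refl_trans fsgraph (rstep S) G N /\ irreducible S N.

Definition sk_equiv (S K : ruleset) : relation fsgraph :=
  clos_refl_sym_trans fsgraph (fun G H => rstep S G H \/ rstep K G H \/ fiso G H).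

Section Semantics.
Variable R : numClosedFieldType.

(* v(o) = R^(vdim o); v(f) given by its matrix entries, indexed by the lists of
   basis indices of the input factors and of the output factors *)
Record valuation := Valuation {
  vdim : sObj T -> nat;
  vmap : sMor T -> seq nat -> seq nat -> R }.

Variable v : valuation.

Definition wdim (G : graph T) (w : gV G) : nat :=
  match vlab w with inl a => vdim v a | inr _ => 1 end.

Definition in_wire (G : graph T) (x : gV G) (i : nat) : option (gV G) :=
  omap (@esrc T G) [pick e : gE G | (etgt e == x) && (ekd e == EIn i)].
Definition out_wire (G : graph T) (x : gV G) (j : nat) : option (gV G) :=
  omap (@etgt T G) [pick e : gE G | (esrc e == x) && (ekd e == EOut j)].

Definition node_factor (G : graph T) (s : {dffun forall w : gV G, 'I_(wdim w)}) (x : gV G) : R :=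
  match vlab x with
  | inr f =>
      vmap v f
        [seq (if in_wire x i is Some w then nat_of_ord (s w) else 0) | i <- iota 0 (size (sdom f))]
        [seq (if out_wire x j is Some w then nat_of_ord (s w) else 0) | j <- iota 0 (size (scod f))]
  | inl _ => 1%R
  end.

(* tensor contraction: wire-vertices are identities (connected wire-vertices
   carry the same index), node-vertices are v(f); a, b = indices on the
   framed inputs and outputs *)
Definition sem (G : fsgraph) (a b : seq nat) : R :=
  (if (size a == nin G) && (size b == nout G) then
    \sum_(s : {dffun forall w : gV G, 'I_(wdim w)} |
            [forall i : 'I_(nin G), nat_of_ord (s (finp i)) == nth 0 a i] &&
            [forall j : 'I_(nout G), nat_of_ord (s (fout j)) == nth 0 b j] &&
            [forall e : gE G, (is_wire (esrc e) && is_wire (etgt e)) ==>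
                              (nat_of_ord (s (esrc e)) == nat_of_ord (s (etgt e)))])
      \prod_(x : gV G) node_factor s x
  else 0)%R.

Definition sem_eq (G H : fsgraph) : Prop :=
  (forall i, omap vlab (inp_at G i) = omap vlab (inp_at H i)) /\
  (forall j, omap vlab (out_at G j) = omap vlab (out_at H j)) /\
  (forall a b, sem G a b = sem H a b).

Variable kappa : fsgraph -> nat.

(* run with parameters p turns (S, K) into (S', K'):
   E enumerates, up to isomorphism, the S-irreducible graphs of size p;
   c i is the chosen kappa-minimal representative G0 of the class of E i *)
Definition synth_run (p : nat * nat * nat * nat) (SK SK' : ruleset * ruleset) : Prop :=
  exists (m : nat) (E : 'I_m -> fsgraph) (c : 'I_m -> 'I_m),
    (forall i, is_framed (E i) /\ has_size p (E i) /\ irreducible SK.1 (E i)) /\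
    (forall G, is_framed G -> has_size p G -> irreducible SK.1 G -> exists i, fiso G (E i)) /\
    (forall i j, fiso (E i) (E j) -> i = j) /\
    (forall i, sem_eq (E i) (E (c i))) /\
    (forall i j, sem_eq (E i) (E j) -> c i = c j /\ kappa (E (c i)) <= kappa (E j)) /\
    (forall r, SK'.1 r <-> SK.1 r \/
        exists i, kappa (E (c i)) < kappa (E i) /\ r = (E i, E (c i))) /\
    (forall r, SK'.2 r <-> SK.2 r \/
        exists i, kappa (E i) = kappa (E (c i)) /\ i <> c i /\
                  (r = (E i, E (c i)) \/ r = (E (c i), E i))).

End Semantics.
End Graphs.

(* Main.v *)
Require Import Defs.
From HB Require Import structures.
From mathcomp Require Import all_boot all_order all_algebra.
From Stdlib Require Import Relations FunctionalExtensionality Classical.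
Set Implicit Arguments. Unset Strict Implicit. Unset Printing Implicit Defensive.
Import GRing.Theory Num.Theory.

Definition nfn (T : signature) (R : numClosedFieldType) (v : valuation T R)
  (G : graph T) (s : gV G -> nat) (x : gV G) : R :=
  match vlab x with
  | inr f =>
      vmap v f
        [seq (if in_wire x i is Some w then s w else 0) | i <- iota 0 (size (sdom f))]
        [seq (if out_wire x j is Some w then s w else 0) | j <- iota 0 (size (scod f))]
  | inl _ => 1%R
  end.

Definition bndf (T : signature) (R : numClosedFieldType) (v : valuation T R)
  (G : graph T) (s : gV G -> nat) : bool := [forall w, s w < wdim v w].
Definition econf (T : signature) (G : graph T) (s : gV G -> nat) : bool :=
  [forall e : gE G, (is_wire (esrc e) && is_wire (etgt e)) ==> (s (esrc e) == s (etgt e))].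
Definition insf (T : signature) (G : fsgraph T) (s : gV G -> nat) (a : seq nat) : bool :=
  [forall i : 'I_(nin G), s (finp i) == nth 0 a i].
Definition outsf (T : signature) (G : fsgraph T) (s : gV G -> nat) (b : seq nat) : bool :=
  [forall j : 'I_(nout G), s (fout j) == nth 0 b j].

Definition semf (T : signature) (R : numClosedFieldType) (v : valuation T R) (B : nat)
  (G : fsgraph T) (a b : seq nat) : R :=
  (if (size a == nin G) && (size b == nout G) then
    \sum_(s : {ffun gV G -> 'I_B.+1} |
       bndf v (fun w => nat_of_ord (s w)) && insf (fun w => nat_of_ord (s w)) a &&
       outsf (fun w => nat_of_ord (s w)) b && econf (fun w => nat_of_ord (s w)))
      \prod_(x : gV G) nfn v (fun w => nat_of_ord (s w)) x
  else 0)%R.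

Lemma sem_ffun (T : signature) (R : numClosedFieldType) (v : valuation T R) (B : nat)
  (G : fsgraph T) a b : (forall w : gV G, wdim v w <= B) ->
  sem v G a b = semf v B G a b.
Proof.
move=> hB; rewrite /sem /semf; case: ifP => // _.
pose psi (s : {dffun forall w : gV G, 'I_(wdim v w)}) : {ffun gV G -> 'I_B.+1} :=
  [ffun w => widen_ord (leq_trans (hB w) (leqnSn B)) (s w)].
have psiE s w : nat_of_ord (psi s w) = nat_of_ord (s w) by rewrite /psi ffunE.
have inj_psi : injective psi.
  move=> s1 s2 e; apply/ffunP => w; apply/val_inj.
  by have := congr1 (fun f : {ffun gV G -> 'I_B.+1} => nat_of_ord (f w)) e; rewrite /= !psiE.
pose P := (fun s : {dffun forall w : gV G, 'I_(wdim v w)} =>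
       insf (fun w => nat_of_ord (s w)) a &&
       outsf (fun w => nat_of_ord (s w)) b && econf (fun w => nat_of_ord (s w))).
pose Q := (fun s : {ffun gV G -> 'I_B.+1} =>
       bndf v (fun w => nat_of_ord (s w)) && insf (fun w => nat_of_ord (s w)) a &&
       outsf (fun w => nat_of_ord (s w)) b && econf (fun w => nat_of_ord (s w))).
have eqset : [set s | Q s] = psi @: [set s | P s].
  apply/setP => t; rewrite inE; apply/idP/imsetP.
  - move=> Qt. have: bndf v (fun w => nat_of_ord (t w)).
      by move: Qt; rewrite /Q => /andP[/andP[/andP[]]].
    move/forallP => hb.
    exists ([ffun w => Ordinal (hb w)] : {dffun forall w : gV G, 'I_(wdim v w)}).
      rewrite inE /P.
      move: Qt; rewrite /Q.
      have -> : (fun w => nat_of_ord (t w)) = (fun w => nat_of_ord (([ffun w => Ordinal (hb w)] : {dffun forall w : gV G, 'I_(wdim v w)}) w)).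
        by apply: FunctionalExtensionality.functional_extensionality => w; rewrite ffunE.
      by case/andP=> [/andP[/andP[_ ->] ->] ->].
    by apply/ffunP => w; apply/val_inj; rewrite /psi !ffunE.
  - case=> s; rewrite inE => Ps ->.
    rewrite /Q.
    have -> : (fun w => nat_of_ord (psi s w)) = (fun w => nat_of_ord (s w)).
      by apply: FunctionalExtensionality.functional_extensionality => w; rewrite psiE.
    rewrite -!andbA; move: Ps; rewrite /P -andbA => ->; rewrite andbT.
    by apply/forallP => w; rewrite ltn_ord.
rewrite (eq_bigl (fun s => s \in [set s | Q s])); last by move=> s; rewrite inE.
rewrite eqset big_imset /=; last by move=> x y _ _; apply: inj_psi.
apply: eq_big => s; first by rewrite inE.
move=> _; apply: eq_bigr => x _.
have E : (fun w => nat_of_ord (psi s w)) = (fun w => nat_of_ord (s w)).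
  by apply: functional_extensionality => w; rewrite psiE.
change (nfn v (fun w => nat_of_ord (s w)) x = nfn v (fun w => nat_of_ord (psi s w)) x).
by rewrite E.
Qed.

Lemma in_wire_hom (T : signature) (K G : graph T) (fv : gV K -> gV G) (fe : gE K -> gE G) k f i :
  ghom fv fe -> injective fv -> is_string_graph G -> vlab k = inr f -> i < size (sdom f) ->
  (forall e, etgt e = fv k -> exists e', fe e' = e) ->
  in_wire (fv k) i = omap fv (in_wire k i).
Proof.
move=> [hl he] injv [_ [_ [_ [_ hn]]]] hk hi hcov.
have hk' : vlab (fv k) = inr f by rewrite hl.
have [hin _] := hn _ _ hk'.
have [e0 [[t0 k0] u0]] := hin i hi.
have [e1 [t1 k1]] : exists e1, etgt e1 = k /\ ekd e1 = EIn i.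
  have [e' ee] := hcov e0 t0.
  exists e'; have [_ [tt kk]] := he e'; split; first by apply: injv; rewrite -tt ee.
  by rewrite -kk ee.
have uniq0 e : etgt e = fv k -> ekd e = EIn i -> e = e0.
  by move=> a b; symmetry; apply: u0.
rewrite /in_wire.
case: pickP => [e /andP[/eqP te /eqP ke]|]; last first.
  by move/(_ e0); rewrite t0 k0 !eqxx.
case: pickP => [e' /andP[/eqP te' /eqP ke']|]; last first.
  by move/(_ e1); rewrite t1 k1 !eqxx.
have [se' [tte' kke']] := he e'.
rewrite /= (uniq0 e) // -(uniq0 (fe e')) ?se' //.
  by rewrite tte' te'.
by rewrite kke'.
Qed.

Lemma out_wire_hom (T : signature) (K G : graph T) (fv : gV K -> gV G) (fe : gE K -> gE G) k f j :
  ghom fv fe -> injective fv -> is_string_graph G -> vlab k = inr f -> j < size (scod f) ->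
  (forall e, esrc e = fv k -> exists e', fe e' = e) ->
  out_wire (fv k) j = omap fv (out_wire k j).
Proof.
move=> [hl he] injv [_ [_ [_ [_ hn]]]] hk hj hcov.
have hk' : vlab (fv k) = inr f by rewrite hl.
have [_ hout] := hn _ _ hk'.
have [e0 [[t0 k0] u0]] := hout j hj.
have [e1 [t1 k1]] : exists e1, esrc e1 = k /\ ekd e1 = EOut j.
  have [e' ee] := hcov e0 t0.
  exists e'; have [tt [_ kk]] := he e'; split; first by apply: injv; rewrite -tt ee.
  by rewrite -kk ee.
have uniq0 e : esrc e = fv k -> ekd e = EOut j -> e = e0.
  by move=> a b; symmetry; apply: u0.
rewrite /out_wire.
case: pickP => [e /andP[/eqP te /eqP ke]|]; last first.
  by move/(_ e0); rewrite t0 k0 !eqxx.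
case: pickP => [e' /andP[/eqP te' /eqP ke']|]; last first.
  by move/(_ e1); rewrite t1 k1 !eqxx.
have [se' [tte' kke']] := he e'.
rewrite /= (uniq0 e) // -(uniq0 (fe e')) ?tte' //.
  by rewrite se' te'.
by rewrite kke'.
Qed.

Lemma nfn_hom (T : signature) (R : numClosedFieldType) (v : valuation T R)
  (K G : graph T) (fv : gV K -> gV G) (fe : gE K -> gE G) (s : gV G -> nat) k :
  ghom fv fe -> injective fv -> is_string_graph G ->
  (forall e, etgt e = fv k \/ esrc e = fv k -> exists e', fe e' = e) ->
  nfn v s (fv k) = nfn v (fun w => s (fv w)) k.
Proof.
move=> hh injv hG hcov; have [hl _] := hh.
rewrite /nfn hl; case hk: (vlab k) => [a|f] //.
congr (vmap v f _ _); apply/eq_in_map => i; rewrite mem_iota add0n => /andP[_ hi].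
  rewrite (in_wire_hom hh injv hG hk hi); first by case: (in_wire k i).
  by move=> e te; apply: hcov; left.
rewrite (out_wire_hom hh injv hG hk hi); first by case: (out_wire k i).
by move=> e te; apply: hcov; right.
Qed.

Lemma omap_insub_ord n A (f : 'I_n -> A) (i : 'I_n) : omap f (insub (val i)) = Some (f i).
Proof. by rewrite valK. Qed.

Lemma omap_insub_lt n A (f : 'I_n -> A) k (h : k < n) : omap f (insub k) = Some (f (Ordinal h)).
Proof. by rewrite insubT. Qed.

Lemma omap_insub_ge n A (f : 'I_n -> A) k : n <= k -> omap f (insub k) = None.
Proof. by move=> h; rewrite insubF // ltnNge h. Qed.

Lemma omap_insub_len n m A A' C (f : 'I_n -> A) (f' : 'I_m -> A') (g : A -> C) (g' : A' -> C) :
  (forall k, omap g (omap f (insub k)) = omap g' (omap f' (insub k))) -> n = m.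
Proof.
move=> h; case: (ltngtP n m) => // hnm.
- by have := h n; rewrite omap_insub_ge // (omap_insub_lt _ hnm).
- by have := h m; rewrite (omap_insub_lt _ hnm) omap_insub_ge.
Qed.

Lemma forall_ordP n (q : nat -> bool) : reflect (forall k, k < n -> q k) [forall i : 'I_n, q i].
Proof.
apply: (iffP forallP) => h.
  by move=> k hk; apply: (h (Ordinal hk)).
by move=> i; apply: h.
Qed.

Lemma wdim_lab (T : signature) (R : numClosedFieldType) (v : valuation T R) (G H : graph T)
  (x : gV G) (y : gV H) : vlab x = vlab y -> wdim v x = wdim v y.
Proof. by rewrite /wdim => ->. Qed.

Lemma wire_lab (T : signature) (G H : graph T)
  (x : gV G) (y : gV H) : vlab x = vlab y -> is_wire x = is_wire y.
Proof. by rewrite /is_wire => ->. Qed.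

Lemma bound_wire (T : signature) (G : graph T) (x : gV G) : is_bound x -> is_wire x.
Proof. by rewrite /is_bound /is_input /is_output => /orP[/andP[]|/andP[]]. Qed.

Lemma nfn_wire (T : signature) (R : numClosedFieldType) (v : valuation T R) (G : graph T)
  (s : gV G -> nat) x : is_wire x -> nfn v s x = 1%R.
Proof. by rewrite /is_wire /nfn; case: (vlab x). Qed.

Definition cinsf (T : signature) (D : context T) (s : gV D -> nat) (a : seq nat) : bool :=
  [forall i : 'I_(c_nin D), s (c_inp i) == nth 0 a i].
Definition coutsf (T : signature) (D : context T) (s : gV D -> nat) (b : seq nat) : bool :=
  [forall j : 'I_(c_nout D), s (c_out j) == nth 0 b j].
Definition hseq_in (T : signature) (D : context T) (s : gV D -> nat) : seq nat :=
  [seq odflt 0 (omap s (hin_at D k)) | k <- iota 0 (h_nin D)].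
Definition hseq_out (T : signature) (D : context T) (s : gV D -> nat) : seq nat :=
  [seq odflt 0 (omap s (hout_at D k)) | k <- iota 0 (h_nout D)].

Definition gsum (T : signature) (R : numClosedFieldType) (v : valuation T R) (B : nat)
  (D : context T) (f : seq nat -> seq nat -> R) (a b : seq nat) : R :=
  (if (size a == c_nin D) && (size b == c_nout D) then
    \sum_(t : {ffun gV D -> 'I_B.+1} |
       bndf v (fun w => nat_of_ord (t w)) && cinsf (fun w => nat_of_ord (t w)) a &&
       coutsf (fun w => nat_of_ord (t w)) b && econf (fun w => nat_of_ord (t w)))
      (\prod_(d : gV D) nfn v (fun w => nat_of_ord (t w)) d) *
       f (hseq_in (fun w => nat_of_ord (t w))) (hseq_out (fun w => nat_of_ord (t w)))
  else 0)%R.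

Lemma omap_insub_len1 n m A' C (f : 'I_n -> C) (f' : 'I_m -> A') (g' : A' -> C) :
  (forall k, omap f (insub k) = omap g' (omap f' (insub k))) -> n = m.
Proof.
move=> h; apply: (@omap_insub_len n m C A' C f f' id g') => k.
by rewrite -h; case: (omap f (insub k)).
Qed.

Lemma inp_at_ord (T : signature) (G : fsgraph T) (i : 'I_(nin G)) : inp_at G i = Some (finp i).
Proof. exact: omap_insub_ord. Qed.
Lemma out_at_ord (T : signature) (G : fsgraph T) (i : 'I_(nout G)) : out_at G i = Some (fout i).
Proof. exact: omap_insub_ord. Qed.

Lemma glue_sem (T : signature) (R : numClosedFieldType) (v : valuation T R)
  (X : fsgraph T) (D : context T) (G : fsgraph T) B a b :
  is_glue X D G -> is_framed X -> is_framed G -> (forall w : gV G, wdim v w <= B) ->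
  sem v G a b = gsum v B D (sem v X) a b.
Proof.
move=> [fD [fX [eD [eX [ifD [ifX [ieD [ieX [hD [hX [hin [hout [hV [hE [gin gout]]]]]]]]]]]]]]].
move=> fXr fGr hB.
have [hGs _] := fGr.
have [hDl hDe] := hD; have [hXl hXe] := hX.
have ninG : nin G = c_nin D by apply: omap_insub_len1 gin.
have noutG : nout G = c_nout D by apply: omap_insub_len1 gout.
have ninX : nin X = h_nin D by apply: omap_insub_len hin.
have noutX : nout X = h_nout D by apply: omap_insub_len hout.
have cov g : (exists d, fD d = g) \/ (exists x, ~~ is_bound x /\ fX x = g).
  case: (boolP [exists d, fD d == g]) => [/existsP[d /eqP]|hn]; first by left; exists d.
  right; case: (boolP [exists x, ~~ is_bound x && (fX x == g)]) =>
    [/existsP[x /andP[? /eqP]]|hn2]; first by exists x.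
  exfalso; have [d ed] : exists d, fD d = g.
    apply: (proj2 (hV g)) => -[x [hx ex]]; move/negP: hn2; apply.
    by apply/existsP; exists x; rewrite hx ex eqxx.
  by move/negP: hn; apply; apply/existsP; exists d; rewrite ed.
have covE e : (exists d, eD d = e) \/ (exists x, eX x = e).
  case: (boolP [exists d, eD d == e]) => [/existsP[d /eqP]|hn]; first by left; exists d.
  right; case: (boolP [exists x, eX x == e]) => [/existsP[x /eqP]|hn2]; first by exists x.
  exfalso; have [d ed] : exists d, eD d = e.
    apply: (proj2 (hE e)) => -[x ex]; move/negP: hn2; apply.
    by apply/existsP; exists x; rewrite ex eqxx.
  by move/negP: hn; apply; apply/existsP; exists d; rewrite ed.
have bnd_of x d : fX x = fD d -> is_bound x.
  move=> e; apply/negPn/negP => nb.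
  by apply: (proj1 (hV (fD d))); [exists d | exists x; split].
have hBX (x : gV X) : wdim v x <= B by rewrite -(wdim_lab v (hXl x)).
have hBD (d : gV D) : wdim v d <= B by rewrite -(wdim_lab v (hDl d)).
have semX : sem v X = semf v B X.
  by apply: functional_extensionality => a'; apply: functional_extensionality => b';
     apply: sem_ffun.
rewrite (@sem_ffun _ _ v B G a b hB) /semf /gsum semX /semf ninG noutG.
case: ifP => // _.
have hsz (f : gV D -> nat) :
  (size (hseq_in f) == nin X) && (size (hseq_out f) == nout X) = true.
  by rewrite !size_map !size_iota ninX noutX !eqxx.
symmetry.
under eq_bigr => t _ do rewrite hsz big_distrr /=.
rewrite pair_big_dep /=.
have wD (d : gV D) : is_wire (fD d) = is_wire d by apply: wire_lab.
have wX (x : gV X) : is_wire (fX x) = is_wire x by apply: wire_lab.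
have dimD (d : gV D) : wdim v (fD d) = wdim v d by apply: wdim_lab.
have dimX (x : gV X) : wdim v (fX x) = wdim v x by apply: wdim_lab.
have hnth_in (f : gV D -> nat) (i : nat) : i < h_nin D ->
    nth 0 (hseq_in f) i = odflt 0 (omap f (hin_at D i)).
  by move=> hi; rewrite /hseq_in (nth_map 0) ?size_iota // nth_iota.
have hnth_out (f : gV D -> nat) (i : nat) : i < h_nout D ->
    nth 0 (hseq_out f) i = odflt 0 (omap f (hout_at D i)).
  by move=> hi; rewrite /hseq_out (nth_map 0) ?size_iota // nth_iota.
have bE (sn : gV G -> nat) :
    bndf v sn = bndf v (fun d => sn (fD d)) && bndf v (fun x => sn (fX x)).
  apply/forallP/andP => [h|[/forallP h1 /forallP h2] g].
    by split; apply/forallP => y; rewrite -?dimD -?dimX; apply: h.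
  case: (cov g) => [[d <-]|[x [_ <-]]]; by rewrite ?dimD ?dimX.
have iE (sn : gV G -> nat) : insf sn a = cinsf (fun d => sn (fD d)) a.
  pose q k := if cin_at D k is Some d then sn (fD d) == nth 0 a k else true.
  transitivity [forall i : 'I_(nin G), q i].
    apply: eq_forallb => i; rewrite /q.
    by have := gin i; rewrite inp_at_ord; case: (cin_at D i) => [d [->]|].
  rewrite ninG; apply: eq_forallb => i; rewrite /q /cin_at omap_insub_ord //.
have oE (sn : gV G -> nat) : outsf sn b = coutsf (fun d => sn (fD d)) b.
  pose q k := if cout_at D k is Some d then sn (fD d) == nth 0 b k else true.
  transitivity [forall i : 'I_(nout G), q i].
    apply: eq_forallb => i; rewrite /q.
    by have := gout i; rewrite out_at_ord; case: (cout_at D i) => [d [->]|].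
  rewrite noutG; apply: eq_forallb => i; rewrite /q /cout_at omap_insub_ord //.
have eE (sn : gV G -> nat) :
    econf sn = econf (fun d => sn (fD d)) && econf (fun x => sn (fX x)).
  apply/forallP/andP => [h|[/forallP h1 /forallP h2] e].
    split; apply/forallP => y.
      by have := h (eD y); have [-> [-> _]] := hDe y; rewrite !wD.
    by have := h (eX y); have [-> [-> _]] := hXe y; rewrite !wX.
  case: (covE e) => [[d <-]|[x <-]].
    by have := h1 d; have [-> [-> _]] := hDe d; rewrite !wD.
  by have := h2 x; have [-> [-> _]] := hXe x; rewrite !wX.
have iX (sn : gV G -> nat) : insf (fun x => sn (fX x)) (hseq_in (fun d => sn (fD d))).
  apply/forallP => i; have hi : i < h_nin D by rewrite -ninX.
  rewrite hnth_in //; have := hin i; rewrite inp_at_ord.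
  by case: (hin_at D i) => [h [->]|].
have oX (sn : gV G -> nat) : outsf (fun x => sn (fX x)) (hseq_out (fun d => sn (fD d))).
  apply/forallP => i; have hi : i < h_nout D by rewrite -noutX.
  rewrite hnth_out //; have := hout i; rewrite out_at_ord.
  by case: (hout_at D i) => [h [->]|].
have nD (sn : gV G -> nat) (d : gV D) : nfn v sn (fD d) = nfn v (fun d => sn (fD d)) d.
  case: (boolP (is_wire d)) => wd; first by rewrite !nfn_wire ?wD.
  apply: nfn_hom => // e [te|se]; case: (covE e) => [//|[x ex]].
    have [_ [tx _]] := hXe x; rewrite -ex tx in te.
    by move: wd; rewrite -wD -te wX bound_wire // (bnd_of _ _ te).
  have [sx _] := hXe x; rewrite -ex sx in se.
  by move: wd; rewrite -wD -se wX bound_wire // (bnd_of _ _ se).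
have nX (sn : gV G -> nat) (x : gV X) : nfn v sn (fX x) = nfn v (fun x => sn (fX x)) x.
  case: (boolP (is_wire x)) => wx; first by rewrite !nfn_wire ?wX.
  apply: nfn_hom => // e [te|se]; case: (covE e) => [[d ed]|//].
    have [_ [td _]] := hDe d; rewrite -ed td in te.
    by move: wx; rewrite bound_wire // (bnd_of _ _ (esym te)).
  have [sd _] := hDe d; rewrite -ed sd in se.
  by move: wx; rewrite bound_wire // (bnd_of _ _ (esym se)).
have pE (sn : gV G -> nat) : (\prod_g nfn v sn g =
    (\prod_d nfn v (fun d => sn (fD d)) d) * \prod_x nfn v (fun x => sn (fX x)) x)%R.
  rewrite (bigID (mem (fD @: [set: gV D]))) /=.
  congr (_ * _)%R.
    rewrite big_imset /=; last by move=> ? ? _ _; apply: ifD.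
    by apply: eq_big => [d|d _]; rewrite ?inE // nD.
  rewrite [RHS](bigID (fun x : gV X => is_bound x)) /=.
  rewrite [X in (X * _)%R]big1 ?mul1r; last by move=> x hx; apply: nfn_wire; apply: bound_wire.
  rewrite (eq_bigl (mem (fX @: [set x | ~~ is_bound x]))); last first.
    move=> g; rewrite /= /in_mem /=; apply/idP/idP.
      move=> hn; case: (cov g) => [[d ed]|[x [hx ex]]].
        by move/negP: hn; case; apply/imsetP; exists d; rewrite ?inE.
      by apply/imsetP; exists x; rewrite ?inE.
    case/imsetP => x; rewrite inE => hx ->; apply/negP => /imsetP[d _ ed].
    by move: hx; rewrite (bnd_of _ _ ed).
  rewrite big_imset /=; last by move=> ? ? _ _; apply: ifX.
  by apply: eq_big => [x|x _]; rewrite ?inE // nX.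
pose Phi (s : {ffun gV G -> 'I_B.+1}) :
    ({ffun gV D -> 'I_B.+1} * {ffun gV X -> 'I_B.+1})%type :=
  ([ffun d => s (fD d)], [ffun x => s (fX x)]).
pose Ginv (p : ({ffun gV D -> 'I_B.+1} * {ffun gV X -> 'I_B.+1})%type) :
    {ffun gV G -> 'I_B.+1} :=
  [ffun w => match [pick d | fD d == w] with
             | Some d => p.1 d
             | None => match [pick x | fX x == w] with Some x => p.2 x | None => ord0 end
             end].
have Phi1 s : (fun d => nat_of_ord ((Phi s).1 d)) = (fun d => nat_of_ord (s (fD d))).
  by apply: functional_extensionality => d; rewrite ffunE.
have Phi2 s : (fun x => nat_of_ord ((Phi s).2 x)) = (fun x => nat_of_ord (s (fX x))).
  by apply: functional_extensionality => d; rewrite ffunE.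
rewrite (reindex Phi); last first.
  exists Ginv.
    move=> s _; apply/ffunP => w; rewrite ffunE.
    case: pickP => [d /eqP <-|nd]; first by rewrite ffunE.
    case: pickP => [x /eqP <-|nx]; first by rewrite ffunE.
    case: (cov w) => [[d ed]|[x [_ ex]]].
      by have := nd d; rewrite ed eqxx.
    by have := nx x; rewrite ex eqxx.
  move=> [t u]; rewrite inE => /and3P[_ /andP[/andP[_ Iu] Ou] _].
  congr pair; apply/ffunP => y; rewrite !ffunE /=.
    case: pickP => [d /eqP /ifD -> //|nd].
    by have := nd y; rewrite eqxx.
  case: pickP => [d /eqP ed|nd]; last first.
    case: pickP => [x /eqP /ifX -> //|nx].
    by have := nx y; rewrite eqxx.
  have := bnd_of _ _ (esym ed); have [_ [_ [_ [fin fout]]]] := fXr.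
  case/orP => [/fin [i ei]|/fout [i ei]].
    have hi : i < h_nin D by rewrite -ninX.
    have := (forallP Iu) i; rewrite hnth_in // ei.
    have := hin i; rewrite inp_at_ord; case: (hin_at D i) => [h [eh]|//] /=.
    have hd : h = d by apply: ifD; rewrite -eh ei ed.
    by rewrite hd => /eqP e; apply: val_inj; rewrite /= e.
  have hi : i < h_nout D by rewrite -noutX.
  have := (forallP Ou) i; rewrite hnth_out // ei.
  have := hout i; rewrite out_at_ord; case: (hout_at D i) => [h [eh]|//] /=.
  have hd : h = d by apply: ifD; rewrite -eh ei ed.
  by rewrite hd => /eqP e; apply: val_inj; rewrite /= e.
apply: eq_big => s; rewrite /= Phi1 Phi2.
  rewrite bE iE oE eE (iX (fun w => nat_of_ord (s w))) (oX (fun w => nat_of_ord (s w))) !andbT.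
  by case: (bndf v _); case: (bndf v _); case: (cinsf _ _); case: (coutsf _ _);
     case: (econf _); case: (econf _).
by move=> _; rewrite pE.
Qed.

Lemma glue_lab (T : signature) (X : fsgraph T) (D : context T) (G : fsgraph T) :
  is_glue X D G ->
  (forall i, omap vlab (inp_at G i) = omap vlab (cin_at D i)) /\
  (forall j, omap vlab (out_at G j) = omap vlab (cout_at D j)).
Proof.
move=> [fD [_ [eD [_ [_ [_ [_ [_ [[hl _] [_ [_ [_ [_ [_ [gin gout]]]]]]]]]]]]]]].
split=> i; [rewrite gin; case: (cin_at D i) => //= d; by rewrite hl
           |rewrite gout; case: (cout_at D i) => //= d; by rewrite hl].
Qed.

Lemma step_sem (T : signature) (R : numClosedFieldType) (v : valuation T R)
  (r : rule T) G H :
  step r G H -> is_framed r.1 -> is_framed r.2 -> sem_eq v r.1 r.2 -> sem_eq v G H.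
Proof.
move=> [fG [fH [D [g1 g2]]]] f1 f2 [_ [_ hs]].
have [l1 l2] := glue_lab g1; have [l1' l2'] := glue_lab g2.
split; first by move=> i; rewrite l1 l1'.
split; first by move=> i; rewrite l2 l2'.
move=> a b.
have [B [hBG hBH]] : exists B, (forall w : gV G, wdim v w <= B) /\ (forall w : gV H, wdim v w <= B).
  exists (\big[maxn/0]_(w : gV G) wdim v w + \big[maxn/0]_(w : gV H) wdim v w)%N; split=> w.
    by apply: (leq_trans (leq_bigmax (F := fun w => wdim v w) w)); apply: leq_addr.
  by apply: (leq_trans (leq_bigmax (F := fun w => wdim v w) w)); apply: leq_addl.
rewrite (glue_sem a b g1 f1 fG hBG) (glue_sem a b g2 f2 fH hBH).
have -> : sem v r.1 = sem v r.2.
  by apply: functional_extensionality => a'; apply: functional_extensionality => b'.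
by [].
Qed.

Lemma fiso_refl (T : signature) (G : fsgraph T) : fiso G G.
Proof.
exists id, id; split; first by exists id.
split; first by exists id.
split; first by split.
by split=> i; case: (inp_at G i) => [?|]; case: (out_at G i) => [?|].
Qed.

Lemma fiso_sym (T : signature) (G H : fsgraph T) : fiso G H -> fiso H G.
Proof.
move=> [fv [fe [[gv fg gf] [[ge eg ge'] [[hl he] [hi ho]]]]]].
exists gv, ge; split; first by exists fv.
split; first by exists fe.
split.
  split=> [w|e]; first by rewrite -{2}(gf w) hl.
  have [s [t k]] := he (ge e); rewrite ge' in s t k.
  by rewrite s t k !fg.
split=> i; [rewrite hi | rewrite ho].
  by case: (inp_at G i) => //= x; rewrite fg.
by case: (out_at G i) => //= x; rewrite fg.
Qed.

Lemma fiso_trans (T : signature) (G H K : fsgraph T) : fiso G H -> fiso H K -> fiso G K.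
Proof.
move=> [fv [fe [bv [be [[hl he] [hi ho]]]]]] [fv' [fe' [bv' [be' [[hl' he'] [hi' ho']]]]]].
exists (fv' \o fv), (fe' \o fe); split; first exact: bij_comp.
split; first exact: bij_comp.
split.
  split=> [w|e] /=; first by rewrite hl' hl.
  have [s [t k]] := he e; have [s' [t' k']] := he' (fe e).
  by rewrite s' t' k' s t k.
split=> i; [rewrite hi' hi | rewrite ho' ho].
  by case: (inp_at G i).
by case: (out_at G i).
Qed.

Definition bctx (T : signature) (n m : nat) (lab : ('I_n + 'I_m)%type -> (sObj T + sMor T)%type) : context T :=
  @Context T (@Graph T ('I_n + 'I_m)%type void lab (fun e => match e with end)
               (fun e => match e with end) (fun e => match e with end))
    n m inl inr n m inl inr.

Lemma glue_bnd (T : signature) (X G : fsgraph T) n m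
  (lab : ('I_n + 'I_m)%type -> (sObj T + sMor T)%type) (bX : ('I_n + 'I_m)%type -> gV X)
  (fX : gV X -> gV G) (eX : gE X -> gE G) :
  is_framed X -> injective bX -> (forall d, vlab (bX d) = lab d) ->
  (forall k, inp_at X k = omap (fun i => bX (inl i)) (insub k)) ->
  (forall k, out_at X k = omap (fun j => bX (inr j)) (insub k)) ->
  bijective fX -> bijective eX -> ghom fX eX ->
  (forall k, inp_at G k = omap fX (inp_at X k)) ->
  (forall k, out_at G k = omap fX (out_at X k)) ->
  is_glue X (bctx lab) G.
Proof.
move=> fr ibX lX hiX hoX bfX beX [hl he] hiG hoG.
have [_ [_ [_ [fin fout]]]] := fr.
have ifX := bij_inj bfX; have ieX := bij_inj beX.
have [gX fg gf] := bfX; have [geX efg egf] := beX.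
exists (fun d => fX (bX d)), fX, (fun e : void => match e with end), eX.
split; first by move=> x y /ifX /ibX.
split; first by [].
split; first by case.
split; first by [].
split; first by split=> [d|[]] //=; rewrite hl.
split; first by split.
split; first by move=> k; rewrite hiX /hin_at /=; case: (insub k).
split; first by move=> k; rewrite hoX /hout_at /=; case: (insub k).
split.
  move=> g; split.
    move=> [d <-] [x [nb /ifX ex]]; move/negP: nb; apply; rewrite ex; clear ex.
    rewrite /is_bound; case: d => [i|j].
      apply/orP; left; apply/fin.
      have := hiX i; rewrite valK /inp_at; case: (insub (val i)) => [i' [<-]|//].
      by exists i'.
    apply/orP; right; apply/fout.
    have := hoX j; rewrite valK /out_at; case: (insub (val j)) => [j' [<-]|//].
    by exists j'.
  move=> h; case: (boolP (is_bound (gX g))) => hb; last first.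
    by exfalso; apply: h; exists (gX g); rewrite gf.
  case/orP: hb => [/fin [i ei]|/fout [j ej]].
    have := hiX i; rewrite inp_at_ord; case: (insub (val i)) => [i' [e']|//].
    by exists (inl i'); rewrite -e' ei gf.
  have := hoX j; rewrite out_at_ord; case: (insub (val j)) => [j' [e']|//].
  by exists (inr j'); rewrite -e' ej gf.
split.
  move=> e; split; first by case=> [[]].
  by move=> h; exfalso; apply: h; exists (geX e); rewrite egf.
split=> k; [rewrite hiG hiX /cin_at /= | rewrite hoG hoX /cout_at /=]; by case: (insub k).
Qed.

Definition bmap (T : signature) (L : fsgraph T) (d : ('I_(nin L) + 'I_(nout L))%type) : gV L :=
  match d with inl i => finp i | inr j => fout j end.
Definition blab (T : signature) (L : fsgraph T) (d : ('I_(nin L) + 'I_(nout L))%type) :=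
  vlab (bmap d).

Lemma ghom_id (T : signature) (G : graph T) : ghom (@id (gV G)) (@id (gE G)).
Proof. by split. Qed.

Lemma bij_id (A : Type) : bijective (@id A).
Proof. by exists id. Qed.

Lemma omap_id' A (x : option A) : x = omap id x.
Proof. by case: x. Qed.

Lemma glue_self (T : signature) (L : fsgraph T) :
  is_framed L -> injective (@bmap T L) -> is_glue L (bctx (@blab T L)) L.
Proof.
move=> fr ib.
apply: (@glue_bnd T L L _ _ (@blab T L) (@bmap T L) id id) => //;
  first [exact: bij_id | exact: ghom_id | by move=> k; apply: omap_id'].
Qed.

Lemma bound_exists (T : signature) (R : numClosedFieldType) (v : valuation T R) (G H : graph T) :
  exists B, (forall w : gV G, wdim v w <= B) /\ (forall w : gV H, wdim v w <= B).
Proof.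
exists (\big[maxn/0]_(w : gV G) wdim v w + \big[maxn/0]_(w : gV H) wdim v w)%N; split=> w.
  by apply: (leq_trans (leq_bigmax (F := fun w => wdim v w) w)); apply: leq_addr.
by apply: (leq_trans (leq_bigmax (F := fun w => wdim v w) w)); apply: leq_addl.
Qed.

Lemma fiso_sem (T : signature) (R : numClosedFieldType) (v : valuation T R) (L G : fsgraph T) :
  fiso L G -> is_framed L -> is_framed G -> injective (@bmap T L) -> sem_eq v L G.
Proof.
move=> [fv [fe [bv [be [hh [hi ho]]]]]] fL fG ib.
have g1 : is_glue L (bctx (@blab T L)) G.
  by apply: (@glue_bnd T L G _ _ (@blab T L) (@bmap T L) fv fe).
have g2 := glue_self fL ib.
have [hl _] := hh.
split; first by move=> i; rewrite hi; case: (inp_at L i) => //= x; rewrite hl.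
split; first by move=> i; rewrite ho; case: (out_at L i) => //= x; rewrite hl.
move=> a b; have [B [h1 h2]] := bound_exists v L G.
by rewrite (glue_sem a b g1 fL fG h2) (glue_sem a b g2 fL fL h1).
Qed.

Lemma step_exists (T : signature) (L R G : fsgraph T) :
  fiso L G -> is_framed L -> is_framed R -> is_framed G ->
  injective (@bmap T L) -> injective (@bmap T R) ->
  (forall i, omap vlab (inp_at L i) = omap vlab (inp_at R i)) ->
  (forall j, omap vlab (out_at L j) = omap vlab (out_at R j)) ->
  step (L, R) G R.
Proof.
move=> [fv [fe [bv [be [hh [hi ho]]]]]] fL fR fG ibL ibR hli hlo.
have g1 : is_glue L (bctx (@blab T L)) G.
  by apply: (@glue_bnd T L G _ _ (@blab T L) (@bmap T L) fv fe).
have eN : nin L = nin R by apply: (omap_insub_len hli).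
have eM : nout L = nout R by apply: (omap_insub_len hlo).
pose cs (d : ('I_(nin L) + 'I_(nout L))%type) : ('I_(nin R) + 'I_(nout R))%type :=
  match d with inl i => inl (cast_ord eN i) | inr j => inr (cast_ord eM j) end.
have ics : injective cs.
  case=> [i|j] [i'|j'] //= e.
    by case: e => /val_inj ->.
  by case: e => /val_inj ->.
have g2 : is_glue R (bctx (@blab T L)) R.
  apply: (@glue_bnd T R R _ _ (@blab T L) (fun d => bmap (cs d)) id id) => //;
    try first [exact: bij_id | exact: ghom_id | by move=> k; apply: omap_id'].
  - by move=> x y /ibR /ics.
  - case=> [i|j] /=.
      have := hli (val i); rewrite (inp_at_ord i) -[val i]/(val (cast_ord eN i)) inp_at_ord.
      by case.
    have := hlo (val j); rewrite (out_at_ord j) -[val j]/(val (cast_ord eM j)) out_at_ord.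
    by case.
  - move=> k; case: (ltnP k (nin L)) => h.
      rewrite (omap_insub_lt _ h); have h' : k < nin R by rewrite -eN.
      by rewrite /inp_at (omap_insub_lt _ h') /=; congr (Some (finp _)); apply: val_inj.
    by rewrite omap_insub_ge // /inp_at omap_insub_ge // -eN.
  - move=> k; case: (ltnP k (nout L)) => h.
      rewrite (omap_insub_lt _ h); have h' : k < nout R by rewrite -eM.
      by rewrite /out_at (omap_insub_lt _ h') /=; congr (Some (fout _)); apply: val_inj.
    by rewrite omap_insub_ge // /out_at omap_insub_ge // -eM.
by split=> //; split=> //; exists (bctx (@blab T L)).
Qed.

Definition touched (T : signature) (G : graph T) :=
  forall w : gV G, is_wire w -> exists e, esrc e = w \/ etgt e = w.

Lemma gen_touched (T : signature) g : touched (generator (T := T) g).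
Proof.
case: g => [a|f] w /=.
  by move=> _; exists tt; case: w; [right|left].
case: w => [[i|j]|] //= _.
  by exists (inl i); left.
by exists (inr j); right.
Qed.

Lemma gen_union_touched (T : signature) gs : touched (gen_union (T := T) gs).
Proof.
elim: gs => [|g gs IH] /=; first by case.
case=> [x|y] /= hw.
  by have [e [he|he]] := @gen_touched T g x hw; exists (inl e); rewrite he; [left|right].
by have [e [he|he]] := IH y hw; exists (inr e); rewrite he; [left|right].
Qed.

Lemma built_touched (T : signature) k (G : graph T) : built k G -> touched G.
Proof.
elim=> [gs|k' G' x y hxy _ IH _ _]; first exact: gen_union_touched.
move=> w /= hw.
have [e he] := IH (val w) hw.
have hr (z : gV G') : z = val w ->
    insubd (exist (fun w => w != y) x hxy) z = w :> {w | w != y}.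
  by move=> ez; apply: val_inj; rewrite val_insubd ez (valP w).
by exists e => /=; case: he => he; [left|right]; apply: hr; rewrite he.
Qed.

Lemma giso_touched (T : signature) (G H : graph T) : giso G H -> touched H -> touched G.
Proof.
move=> [fv [fe [bv [[ge eg ge'] [hl he]]]]] tH w hw.
have hw' : is_wire (fv w) by rewrite (wire_lab (hl w)).
have [e0 he0] := tH _ hw'; exists (ge e0).
have [s [t _]] := he (ge e0); rewrite ge' in s t.
have iv := bij_inj bv.
by case: he0 => he0; [left|right]; apply: iv; rewrite -?s -?t.
Qed.

Lemma sized_inj (T : signature) p (G : fsgraph T) :
  is_framed G -> has_size p G -> injective (@bmap T G).
Proof.
case: p => [[[M N] P] Q] [_ [fi [fo [hin hout]]]] [_ [_ [_ [k [G0 [_ [hb hg]]]]]]].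
have tG := giso_touched hg (built_touched hb).
have nc (i : 'I_(nin G)) (j : 'I_(nout G)) : finp i <> fout j.
  move=> e.
  have /andP[hw /forallP ni] : is_input (finp i) by apply/hin; exists i.
  have /andP[_ /forallP no] : is_output (finp i) by apply/hout; exists j.
  have [e0 [he|he]] := tG _ hw.
    by have := no e0; rewrite he eqxx.
  by have := ni e0; rewrite he eqxx.
case=> [i|j] [i'|j'] //= e.
- by rewrite (fi _ _ e).
- by case: (nc _ _ e).
- by case: (nc _ _ (esym e)).
- by rewrite (fo _ _ e).
Qed.

Lemma sem_eq_refl (T : signature) (R : numClosedFieldType) (v : valuation T R) G : sem_eq v G G.
Proof. by []. Qed.

Lemma sem_eq_sym (T : signature) (R : numClosedFieldType) (v : valuation T R) G H :
  sem_eq v G H -> sem_eq v H G.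
Proof. by move=> [h1 [h2 h3]]; split; [|split] => *; rewrite ?h1 ?h2 ?h3. Qed.

Lemma sem_eq_trans (T : signature) (R : numClosedFieldType) (v : valuation T R) G H K :
  sem_eq v G H -> sem_eq v H K -> sem_eq v G K.
Proof.
move=> [h1 [h2 h3]] [h1' [h2' h3']]; split; [|split] => *.
- by rewrite h1 h1'.
- by rewrite h2 h2'.
- by rewrite h3 h3'.
Qed.

Lemma nf_exists (T : signature) (kappa : fsgraph T -> nat) (S S' : ruleset T) :
  (forall G H, rstep S G H -> rstep S' G H) ->
  (forall G H, rstep S' G H -> kappa H < kappa G) ->
  forall G, exists N, clos_refl_trans _ (rstep S) G N /\ irreducible S N.
Proof.
move=> sub dec.
suff: forall k G, kappa G < k -> exists N, clos_refl_trans _ (rstep S) G N /\ irreducible S N.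
  by move=> h G; apply: (h (kappa G).+1).
elim=> [//|k IH] G hk.
case: (classic (irreducible S G)) => hirr.
  by exists G; split=> //; apply: rt_refl.
have [H hGH] : exists H, rstep S G H.
  by apply: NNPP => hn; apply: hirr.
have hkH : kappa H < k by apply: leq_trans (dec _ _ (sub _ _ hGH)) _.
have [N [hN1 hN2]] := IH H hkH.
by exists N; split=> //; apply: rt_trans hN1; apply: rt_step.
Qed.

Lemma rt_mono (T : signature) (S S' : ruleset T) :
  (forall G H, rstep S G H -> rstep S' G H) ->
  forall G H, clos_refl_trans _ (rstep S) G H -> clos_refl_trans _ (rstep S') G H.
Proof.
move=> sub G H; elim=> [x y h|x|x y z _ h1 _ h2].
- by apply: rt_step; apply: sub.
- exact: rt_refl.
- exact: rt_trans h1 h2.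
Qed.

Lemma rt_sk (T : signature) (S K : ruleset T) G H :
  clos_refl_trans _ (rstep S) G H -> sk_equiv S K G H.
Proof.
elim=> [x y h|x|x y z _ h1 _ h2].
- by apply: rst_step; left.
- exact: rst_refl.
- exact: rst_trans h1 h2.
Qed.
Theorem theorem2 (T : signature) (R : numClosedFieldType) (v : valuation T R)
  (kappa : fsgraph T -> nat) (n : nat) (ps : nat -> nat * nat * nat * nat)
  (st : nat -> ruleset T * ruleset T) :
  (* initial reductions: valid rules, sound for the valuation v *)
  (forall r, (st 0).1 r -> valid_rule r /\ sem_eq v r.1 r.2) ->
  (* initially K is empty *)
  (forall r, ~ (st 0).2 r) ->
  (* every generator is irreducible w.r.t. the initial S *)
  (forall G : fsgraph T, is_framed G -> (exists g, giso G (generator g)) ->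
     irreducible (st 0).1 G) ->
  (* kappa is invariant under isomorphism *)
  (forall G H, fiso G H -> kappa G = kappa H) ->
  (* kappa strictly decreases along rewriting with all rules ever in S *)
  (forall G H, rstep (st n).1 G H -> kappa H < kappa G) ->
  (* rewriting with S never increases size *)
  (forall p G H, rstep (st n).1 G H -> has_size p G -> has_size p H) ->
  (* the runs, performed in sequence *)
  (forall i, i < n -> synth_run v kappa (ps i) (st i) (st i.+1)) ->
  (forall i, i < n -> forall G H : fsgraph T,
     is_framed G -> is_framed H -> has_size (ps i) G -> has_size (ps i) H ->
     sem_eq v G H -> sk_equiv (st n).1 (st n).2 G H) /\
  ((forall r, ~ (st n).2 r) ->
   forall i, i < n ->
     (forall G : fsgraph T, is_framed G -> has_size (ps i) G ->
        (exists N, nform (st n).1 G N) /\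
        (forall N1 N2, nform (st n).1 G N1 -> nform (st n).1 G N2 -> fiso N1 N2)) /\
     (forall G H : fsgraph T,
        is_framed G -> is_framed H -> has_size (ps i) G -> has_size (ps i) H ->
        sem_eq v G H ->
        forall NG NH, nform (st n).1 G NG -> nform (st n).1 H NH -> fiso NG NH)).

Proof.
move=> h0S h0K hgen hkiso hdec hsize hrun.
have monoS : forall i j r, i <= j -> j <= n -> (st i).1 r -> (st j).1 r.
  move=> i j r; elim: j => [|j IH] hij hjn.
    by move: hij; rewrite leqn0 => /eqP ->.
  rewrite leq_eqVlt in hij; case/orP: hij => [/eqP -> //|hij] hr.
  have [m [E [c [_ [_ [_ [_ [_ [hS _]]]]]]]]] := hrun j hjn.
  by apply/hS; left; apply: IH => //; apply: ltnW.
have monoK : forall i j r, i <= j -> j <= n -> (st i).2 r -> (st j).2 r.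
  move=> i j r; elim: j => [|j IH] hij hjn.
    by move: hij; rewrite leqn0 => /eqP ->.
  rewrite leq_eqVlt in hij; case/orP: hij => [/eqP -> //|hij] hr.
  have [m [E [c [_ [_ [_ [_ [_ [_ hK]]]]]]]]] := hrun j hjn.
  by apply/hK; left; apply: IH => //; apply: ltnW.
have inv : forall i, i <= n -> forall r, (st i).1 r \/ (st i).2 r ->
    is_framed r.1 /\ is_framed r.2 /\ sem_eq v r.1 r.2.
  elim=> [_ r [h|h]|i IH hi r h].
  - by have [[f1 [f2 _]] hs] := h0S r h.
  - by case: (h0K r h).
  - have [m [E [c [hE [_ [_ [hsem [_ [hS hK]]]]]]]]] := hrun i hi.
    case: h => [/hS [h|[k [_ ->]]]|/hK [h|[k [_ [_ [->| ->]]]]]].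
    + by apply: IH (ltnW hi) r (or_introl h).
    + by have [f1 _] := hE k; have [f2 _] := hE (c k); split=> //; split=> //; apply: hsem.
    + by apply: IH (ltnW hi) r (or_intror h).
    + by have [f1 _] := hE k; have [f2 _] := hE (c k); split=> //; split=> //; apply: hsem.
    + have [f1 _] := hE k; have [f2 _] := hE (c k).
      by split=> //; split=> //; apply: sem_eq_sym; apply: hsem.
have sound : forall G H, rstep (st n).1 G H -> sem_eq v G H.
  move=> G H [r [hr hst]].
  have [f1 [f2 hs]] := inv n (leqnn n) r (or_introl hr).
  exact: step_sem hst f1 f2 hs.
have rt_props : forall p G N, clos_refl_trans _ (rstep (st n).1) G N ->
    is_framed G -> has_size p G -> is_framed N /\ has_size p N /\ sem_eq v G N.
  move=> p G N; elim=> [x y hxy|x|x y z _ IH1 _ IH2] fx sx.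
  - have [r [_ [_ [fy _]]]] := hxy.
    by split=> //; split; [exact: hsize hxy sx | exact: sound].
  - by split=> //; split=> //; apply: sem_eq_refl.
  - have [fy [sy hxy]] := IH1 fx sx; have [fz [sz hyz]] := IH2 fy sy.
    by split=> //; split=> //; apply: sem_eq_trans hxy hyz.
have core : forall i, i < n ->
    exists (m : nat) (E : 'I_m -> fsgraph T) (c : 'I_m -> 'I_m),
    (forall G N, is_framed G -> has_size (ps i) G ->
       clos_refl_trans _ (rstep (st n).1) G N -> irreducible (st i).1 N ->
       exists a, is_framed N /\ has_size (ps i) N /\ fiso N (E a) /\ sem_eq v G (E a)) /\
    (forall a b, sem_eq v (E a) (E b) -> c a = c b) /\
    (forall a, sk_equiv (st n).1 (st n).2 (E a) (E (c a))) /\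
    (forall N a, is_framed N -> irreducible (st n).1 N -> fiso N (E a) ->
       a = c a \/ exists r, (st n).2 r) /\
    (forall G, irreducible (st n).1 G -> irreducible (st i).1 G).
  move=> i hi.
  have [m [E [c [hE [hcov [huniq [hsem [hmin [hS hK]]]]]]]]] := hrun i hi.
  have subS G H : rstep (st i).1 G H -> rstep (st n).1 G H.
    by move=> [r [hr h]]; exists r; split=> //; apply: monoS (ltnW hi) (leqnn n) hr.
  have subS1 r : (st i.+1).1 r -> (st n).1 r by apply: monoS.
  have subK1 r : (st i.+1).2 r -> (st n).2 r by apply: monoK.
  have stepE a N : fiso (E a) N -> is_framed N -> step (E a, E (c a)) N (E (c a)).
    move=> iso fN.
    have [fa [sa _]] := hE a; have [fca [sca _]] := hE (c a).
    have [l1 [l2 _]] := hsem a.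
    exact: step_exists iso fa fca fN (sized_inj fa sa) (sized_inj fca sca) l1 l2.
  exists m, E, c; split.
    move=> G N fG sG hGN irrN.
    have [fN [sN seN]] := rt_props _ _ _ hGN fG sG.
    have [a ha] := hcov N fN sN irrN.
    exists a; split=> //; split=> //; split=> //.
    apply: sem_eq_trans seN _.
    have [fa [sa _]] := hE a.
    exact: fiso_sem ha fN fa (sized_inj fN sN).
  split; first by move=> a b h; have [] := hmin a b h.
  split.
    move=> a; case: (eqVneq a (c a)) => [<-|hne]; first exact: rst_refl.
    have [_ hle] := hmin a a (sem_eq_refl v (E a)).
    have [fa _] := hE a.
    have hst := stepE a (E a) (fiso_refl _) fa.
    rewrite leq_eqVlt in hle; case/orP: hle => [/eqP heq|hlt].
      apply: rst_step; right; left; exists (E a, E (c a)); split=> //.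
      apply: subK1; apply/hK; right; exists a; split=> //; split; [by apply/eqP|by left].
    apply: rst_step; left; exists (E a, E (c a)); split=> //.
    by apply: subS1; apply/hS; right; exists a.
  split.
    move=> N a fN irrN iso; case: (eqVneq a (c a)) => [|hne]; first by left.
    right; have [_ hle] := hmin a a (sem_eq_refl v (E a)).
    rewrite leq_eqVlt in hle; case/orP: hle => [/eqP heq|hlt].
      exists (E a, E (c a)); apply: subK1; apply/hK; right; exists a.
      by split=> //; split; [by apply/eqP|by left].
    exfalso; apply: irrN; exists (E (c a)), (E a, E (c a)); split.
      by apply: subS1; apply/hS; right; exists a.
    by apply: stepE (fiso_sym iso) fN.
  by move=> G irr [H h]; apply: irr; exists H; apply: subS.
split.
  move=> i hi G H fG fH sG sH hGH.
  have [m [E [c [hcl [hc [hlink _]]]]]] := core i hi.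
  have subS G' H' : rstep (st i).1 G' H' -> rstep (st n).1 G' H'.
    by move=> [r [hr h]]; exists r; split=> //; apply: monoS (ltnW hi) (leqnn n) hr.
  have [G' [hG' irrG']] := nf_exists subS hdec G.
  have [H' [hH' irrH']] := nf_exists subS hdec H.
  have hG'' := rt_mono subS hG'; have hH'' := rt_mono subS hH'.
  have [a [_ [_ [isoG seG]]]] := hcl G G' fG sG hG'' irrG'.
  have [b [_ [_ [isoH seH]]]] := hcl H H' fH sH hH'' irrH'.
  have hab : sem_eq v (E a) (E b).
    by apply: sem_eq_trans (sem_eq_sym seG) _; apply: sem_eq_trans hGH seH.
  have hcab := hc a b hab.
  eapply rst_trans; first exact: (rt_sk _ hG'').
  eapply rst_trans; first by apply: rst_step; right; right; exact: isoG.
  eapply rst_trans; first exact: (hlink a).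
  rewrite hcab.
  eapply rst_trans; first exact: (rst_sym _ _ _ _ (hlink b)).
  apply: rst_sym; eapply rst_trans; first exact: (rt_sk _ hH'').
  by apply: rst_step; right; right.
move=> hKn i hi.
have [m [E [c [hcl [hc [_ [hfix hirr]]]]]]] := core i hi.
have fix1 N a : is_framed N -> irreducible (st n).1 N -> fiso N (E a) -> a = c a.
  by move=> fN irrN iso; case: (hfix N a fN irrN iso) => // [[r hr]]; case: (hKn r).
split.
  move=> G fG sG; split.
    have [N [hN irrN]] := nf_exists (fun G H (h : rstep (st n).1 G H) => h) hdec G.
    by exists N.
  move=> N1 N2 [h1 irr1] [h2 irr2].
  have [a [f1 [_ [iso1 se1]]]] := hcl G N1 fG sG h1 (hirr _ irr1).
  have [b [f2 [_ [iso2 se2]]]] := hcl G N2 fG sG h2 (hirr _ irr2).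
  have hab : sem_eq v (E a) (E b) by apply: sem_eq_trans (sem_eq_sym se1) se2.
  have eab : a = b by rewrite (fix1 _ _ f1 irr1 iso1) (fix1 _ _ f2 irr2 iso2) (hc a b hab).
  by apply: fiso_trans iso1 _; rewrite eab; apply: fiso_sym.
move=> G H fG fH sG sH hGH NG NH [h1 irr1] [h2 irr2].
have [a [f1 [_ [iso1 se1]]]] := hcl G NG fG sG h1 (hirr _ irr1).
have [b [f2 [_ [iso2 se2]]]] := hcl H NH fH sH h2 (hirr _ irr2).
have hab : sem_eq v (E a) (E b).
  by apply: sem_eq_trans (sem_eq_sym se1) _; apply: sem_eq_trans hGH se2.
have eab : a = b by rewrite (fix1 _ _ f1 irr1 iso1) (fix1 _ _ f2 irr2 iso2) (hc a b hab).
by apply: fiso_trans iso1 _; rewrite eab; apply: fiso_sym.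
Qed.
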